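(* Consider $m$-th B-spline boosted quantum phase estimation with $l$ ancilla qubits, as described in the context, applied to an eigenstate of $U$ with phase parameter $E$. For a target failure probability $\delta\in(0,1)$ and a target (normalised) confidence-interval width $\epsilon\in(0,1)$, take the B-spline order $m = O(\log \frac{1}{\delta})$. Then the probability of measuring an outcome outside a normalised confidence interval of width $\epsilon$ around the true phase is at most $\delta$ provided the number of ancilla qubits is $l = O\left(\log \frac{1}{\epsilon} + \log\log \frac{1}{\delta}\right)$.
   Context: Quantum phase estimation (QPE): let $U$ be a unitary and $\ket{\psi}$ an eigenstate of $U$. With $l$ ancilla qubits whose basis states are labelled by integers $x\in\{-2^{l-1}+1,\dots,2^{l-1}\}$, one prepares a ''window state'' $\frac{1}{\tilde{\mathcal N}}\sum_x w(x)\ket{x}$ on the ancillas, applies $U^x$ to $\ket{\psi}$ controlled on the ancilla value $x$ (producing a phase $e^{iEx}$, where $E$ is the eigenphase in units of the ancilla grid), then applies the inverse quantum Fourier transform to the ancillas and measures them, obtaining an integer $k$ as an estimate of $E$. For the $m$-th B-spline window (the $m$-fold self-convolution of the rectangular function, a piecewise polynomial of degree $m-1$ with $m$ pieces, suitably rescaled to the ancilla grid), the resulting post-QPE ancilla state is $\frac{1}{\mathcal N}\sum_{k=-2^{l-1}+1}^{2^{l-1}} \left(\frac{\sin\frac{(k-E)\pi}{m}}{\frac{(k-E)\pi}{m}}\right)^m\ket{k}\ket{\psi}$, with $\mathcal N$ the normalising constant. The tail probability $\delta$ is the probability of measuring $k$ with $|k-E|>m$, i.e. outside the confidence interval $E\pm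 m$; in normalised units (dividing by $2^l$) this confidence interval has width $\epsilon = 2m/2^l$. *)

(* Defs.v *)
From Stdlib Require Import Reals Lra Lia.
Open Scope R_scope.

Definition sinc (x : R) : R :=
  if Req_EM_T x 0 then 1 else sin x / x.

(* Unnormalised amplitude of outcome k in the post-QPE ancilla state
   for the m-th B-spline window and eigenphase E (grid units):
   (sin((k-E)pi/m) / ((k-E)pi/m))^m. *)
Definition bspline_amp (m : nat) (E k : R) : R :=
  (sinc ((k - E) * PI / INR m)) ^ m.

(* The i-th ancilla outcome, i = 0 .. 2^l - 1, is the integer
   k = i + 1 - 2^(l-1), so k ranges over {-2^(l-1)+1, ..., 2^(l-1)}. *)
Definition outcome (l i : nat) : R := INR i + 1 - 2 ^ (l - 1).

Definition total_weight (m l : nat) (E : R) : R :=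
  sum_f_R0 (fun i => (bspline_amp m E (outcome l i)) ^ 2) (2 ^ l - 1)%nat.

Definition prob_outside (m l : nat) (E eps : R) : R :=
  sum_f_R0 (fun i =>
     if Rlt_dec (eps / 2) (Rabs ((outcome l i - E) / 2 ^ l))
     then (bspline_amp m E (outcome l i)) ^ 2 else 0) (2 ^ l - 1)%nat
  / total_weight m l E.

(* Main.v *)
Require Import Defs.
From Stdlib Require Import Reals Lra Lia ZArith.
Open Scope R_scope.

Lemma ln_le' x y : 0 < x -> x <= y -> ln x <= ln y.
Proof. intros Hx Hxy. destruct (Req_dec x y) as [->|H]. lra.
  left. apply ln_increasing; lra. Qed.

Lemma sum_ge_term (f : nat -> R) n i :
  (forall j, 0 <= f j) -> (i <= n)%nat -> f i <= sum_f_R0 f n.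
Proof.
  intros Hf Hi. induction n as [|n IH].
  - assert (i = 0)%nat by lia. subst. simpl. lra.
  - simpl. destruct (Nat.eq_dec i (S n)) as [->|Hne].
    + assert (0 <= sum_f_R0 f n).
      { clear IH Hi. induction n; simpl; [apply Hf| specialize (Hf (S n)); lra]. }
      lra.
    + assert (i <= n)%nat by lia. specialize (IH H). specialize (Hf (S n)). lra.
Qed.

Lemma sum_le_const (f : nat -> R) n B :
  (forall j, (j <= n)%nat -> f j <= B) -> sum_f_R0 f n <= INR (S n) * B.
Proof.
  induction n as [|n IH]; intros Hf.
  - simpl. specialize (Hf 0%nat (le_n 0)). lra.
  - simpl sum_f_R0. rewrite S_INR.
    assert (sum_f_R0 f n <= INR (S n) * B) by (apply IH; intros; apply Hf; lia).
    specialize (Hf (S n) (le_n _)). rewrite S_INR in *. lra.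
Qed.

Lemma sinc_sq_upper y : y <> 0 -> sinc y ^ 2 <= / y ^ 2.
Proof.
  intros Hy. unfold sinc. destruct (Req_EM_T y 0) as [|_]; [contradiction|].
  pose proof (SIN_bound y).
  assert (0 < y^2) by (pose proof (Rsqr_pos_lt y Hy); unfold Rsqr in *; nra).
  replace ((sin y / y)^2) with (sin y ^2 * / y^2) by (field; auto).
  assert (sin y ^ 2 <= 1) by nra.
  assert (0 < / y^2) by (apply Rinv_0_lt_compat; auto).
  nra.
Qed.

Lemma sin_lb3 a : 0 <= a <= PI / 2 -> a / 3 <= sin a.
Proof.
  intros Ha. pose proof PI_4. pose proof PI_RGT_0.
  destruct (sin_bound a 0 ltac:(lra) ltac:(lra)) as [Hsb _].
  unfold sin_approx, sin_term in Hsb. simpl in Hsb.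
  assert (a <= 2) by lra.
  assert (a - a^3/6 >= a/3) by nra.
  lra.
Qed.

Lemma sinc_sq_lower y : Rabs y <= PI / 2 -> / 9 <= sinc y ^ 2.
Proof.
  intros Hy. unfold sinc. destruct (Req_EM_T y 0) as [|Hy0]; [lra|].
  assert (Hs : sin y / y = sin (Rabs y) / Rabs y).
  { unfold Rabs. destruct (Rcase_abs y). rewrite sin_neg. field. auto. auto. }
  rewrite Hs.
  assert (0 < Rabs y) by (apply Rabs_pos_lt; auto).
  pose proof (sin_lb3 (Rabs y) ltac:(lra)).
  assert (/3 <= sin (Rabs y) / Rabs y).
  { apply (Rmult_le_reg_r (Rabs y)); auto. field_simplify; lra. }
  nra.
Qed.

Lemma final_pow (N q : R) (m : nat) :
  1 <= N -> (1 <= m)%nat -> 0 <= q -> q <= / (16 * N) -> N * q ^ m <= / 16 ^ m.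
Proof.
  intros HN Hm Hq Hqb.
  assert (H1 : q ^ m <= (/ (16 * N)) ^ m) by (apply pow_incr; lra).
  rewrite pow_inv, Rpow_mult_distr in H1.
  assert (HNm : N <= N ^ m) by (rewrite <- (pow_1 N) at 1; apply Rle_pow; auto).
  assert (0 < 16 ^ m) by (apply pow_lt; lra).
  assert (/ (16 ^ m * N ^ m) <= / (16 ^ m * N)).
  { apply Rinv_le_contravar; nra. }
  assert (N * / (16 ^ m * N) = / 16 ^ m) by (field; lra).
  nra.
Qed.

Lemma amp_sq m E k : bspline_amp m E k ^ 2 = (sinc ((k - E) * PI / INR m) ^ 2) ^ m.
Proof. unfold bspline_amp. rewrite <- !pow_mult. f_equal. lia. Qed.

Lemma core m l E eps delta : (2 <= m)%nat -> (1 <= l)%nat -> 0 < eps ->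
  64 * INR m ^ 2 / eps ^ 2 <= 2 ^ l -> / 16 ^ m <= delta ->
  - 2 ^ (l - 1) + 1 <= E <= 2 ^ (l - 1) -> prob_outside m l E eps <= delta.
Proof.
  intros Hm Hl Heps HNb Hd HE.
  set (N := 2 ^ l) in *.
  assert (HN2 : 2 ^ (l - 1) * 2 = N).
  { unfold N. replace l with (S (l - 1)) at 2 by lia. simpl. ring. }
  assert (HN1 : 1 <= N).
  { pose proof (pow_R1_Rle 2 (l-1) ltac:(lra)). lra. }
  assert (Hpl : (1 <= 2 ^ l)%nat).
  { pose proof (Nat.pow_nonzero 2 l ltac:(lia)). lia. }
  assert (HNn : INR (S (2 ^ l - 1)) = N).
  { replace (S (2 ^ l - 1)) with (2 ^ l)%nat by lia. rewrite pow_INR. reflexivity. }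
  assert (Hmpos : 2 <= INR m) by (apply (le_INR 2); auto).
  pose proof PI2_3_2 as Hpi.
  set (L := eps * N / 2).
  assert (HL : 0 < L) by (unfold L; nra).
  assert (HT : (/ 9) ^ m <= total_weight m l E).
  { unfold total_weight.
    set (t := E + 2 ^ (l - 1) - 1).
    destruct (base_Int_part t) as [Hz1 Hz2].
    set (z := Int_part t) in *.
    assert (Hz0 : (0 <= z)%Z).
    { assert (IZR (-1) < IZR z) by (simpl; unfold t in *; lra).
      apply lt_IZR in H. lia. }
    set (i0 := Z.to_nat z).
    assert (Hi0 : INR i0 = IZR z) by (unfold i0; rewrite INR_IZR_INZ, Z2Nat.id; auto).
    assert (Hi0n : (i0 <= 2 ^ l - 1)%nat).
    { assert (INR i0 < INR (2 ^ l)).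
      { rewrite pow_INR, Hi0. replace (INR 2) with 2 by (simpl; lra). fold N. unfold t in *. lra. }
      apply INR_lt in H. lia. }
    eapply Rle_trans; [| apply (sum_ge_term _ _ i0); [intros; apply pow2_ge_0 | exact Hi0n]].
    cbv beta. rewrite amp_sq. apply pow_incr. split; [left; apply Rinv_0_lt_compat; lra|].
    apply sinc_sq_lower.
    unfold outcome. rewrite Hi0.
    assert (Hx : Rabs (IZR z + 1 - 2 ^ (l - 1) - E) <= 1).
    { apply Rabs_le. unfold t in *. lra. }
    unfold Rdiv. rewrite Rabs_mult, Rabs_mult, (Rabs_right PI) by lra.
    rewrite (Rabs_right (/ INR m)) by (left; apply Rinv_0_lt_compat; lra).
    assert (/ INR m <= / 2) by (apply Rinv_le_contravar; lra).
    assert (0 < / INR m) by (apply Rinv_0_lt_compat; lra).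
    pose proof (Rabs_pos (IZR z + 1 - 2 ^ (l - 1) - E)).
    assert (Rabs (IZR z + 1 - 2 ^ (l - 1) - E) * PI <= PI) by nra.
    nra. }
  assert (HTpos : 0 < total_weight m l E).
  { eapply Rlt_le_trans; [|exact HT]. apply pow_lt. apply Rinv_0_lt_compat; lra. }
  set (B := (INR m ^ 2 / (PI ^ 2 * L ^ 2)) ^ m).
  assert (HS : sum_f_R0 (fun i =>
     if Rlt_dec (eps / 2) (Rabs ((outcome l i - E) / 2 ^ l))
     then (bspline_amp m E (outcome l i)) ^ 2 else 0) (2 ^ l - 1)%nat <= N * B).
  { rewrite <- HNn. apply sum_le_const. intros j _.
    assert (HB0 : 0 <= B).
    { unfold B. apply pow_le. apply Rle_mult_inv_pos; [apply pow2_ge_0|].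
      apply Rmult_lt_0_compat; apply pow_lt; lra. }
    destruct (Rlt_dec _ _) as [Hout|]; [|exact HB0].
    fold N in Hout.
    set (x := outcome l j - E) in *.
    assert (HxL : L < Rabs x).
    { unfold Rdiv in Hout. rewrite Rabs_mult, (Rabs_right (/ N)) in Hout
        by (left; apply Rinv_0_lt_compat; lra).
      unfold L. apply (Rmult_lt_reg_r (/ N)). apply Rinv_0_lt_compat; lra.
      replace (eps * N / 2 * / N) with (eps / 2) by (field; lra). exact Hout. }
    rewrite amp_sq. unfold B. apply pow_incr. split; [apply pow2_ge_0|].
    fold x.
    assert (Hx0 : x <> 0) by (intro H0; rewrite H0, Rabs_R0 in HxL; lra).
    assert (Hy0 : x * PI / INR m <> 0).
    { unfold Rdiv. apply Rmult_integral_contrapositive_currified;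
      [apply Rmult_integral_contrapositive_currified; [exact Hx0|lra] | apply Rinv_neq_0_compat; lra]. }
    eapply Rle_trans; [apply sinc_sq_upper; exact Hy0|].
    replace (/ (x * PI / INR m) ^ 2) with (INR m ^ 2 / (PI ^ 2 * x ^ 2)) by (field; lra).
    assert (Hx2 : L ^ 2 < x ^ 2).
    { rewrite <- (pow2_abs x). nra. }
    unfold Rdiv. apply Rmult_le_compat_l; [apply pow2_ge_0|].
    apply Rinv_le_contravar. apply Rmult_lt_0_compat; apply pow_lt; lra.
    apply Rmult_le_compat_l; [left; apply pow_lt; lra| lra]. }
  unfold prob_outside.
  eapply Rle_trans.
  { unfold Rdiv. apply Rmult_le_compat_r; [left; apply Rinv_0_lt_compat; exact HTpos| exact HS]. }
  eapply Rle_trans.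
  { apply Rmult_le_compat_l.
    - apply Rmult_le_pos; [lra|]. unfold B. apply pow_le. apply Rle_mult_inv_pos; [apply pow2_ge_0|].
      apply Rmult_lt_0_compat; apply pow_lt; lra.
    - apply (Rinv_le_contravar ((/ 9) ^ m)); [apply pow_lt; apply Rinv_0_lt_compat; lra| exact HT]. }
  rewrite pow_inv, Rinv_inv. unfold B. rewrite Rmult_assoc, <- Rpow_mult_distr.
  eapply Rle_trans; [|exact Hd].
  apply final_pow; auto; try lia.
  - apply Rmult_le_pos; [|lra]. apply Rle_mult_inv_pos; [apply pow2_ge_0|].
    apply Rmult_lt_0_compat; apply pow_lt; lra.
  - assert (H64 : 64 * INR m ^ 2 <= N * eps ^ 2).
    { apply (Rmult_le_reg_r (/ eps ^ 2)). apply Rinv_0_lt_compat, pow_lt; lra.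
      replace (N * eps ^ 2 * / eps ^ 2) with N by (field; lra). exact HNb. }
    assert (HPI2 : 9 <= PI ^ 2) by nra.
    replace (INR m ^ 2 / (PI ^ 2 * L ^ 2) * 9) with ((9 / PI ^ 2) * (INR m ^ 2 / L ^ 2))
      by (field; split; lra).
    assert (9 / PI ^ 2 <= 1).
    { assert (0 < PI ^ 2) by (pose proof PI_RGT_0; nra). apply (Rmult_le_reg_r (PI ^ 2)); auto.
      replace (9 / PI ^ 2 * PI ^ 2) with 9 by (field; lra). lra. }
    assert (INR m ^ 2 / L ^ 2 <= / (16 * N)).
    { unfold L. apply (Rmult_le_reg_r (16 * N * (eps * N / 2) ^ 2)).
      apply Rmult_lt_0_compat; [lra| apply pow_lt; nra].
      field_simplify; try lra. nra. }
    assert (0 <= INR m ^ 2 / L ^ 2) by (apply Rle_mult_inv_pos; [apply pow2_ge_0| apply pow_lt; lra]).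
    assert (0 <= 9 / PI ^ 2) by (apply Rle_mult_inv_pos; nra).
    nra.
Qed.

Theorem theorem1 :
  exists C : R, 0 < C /\
    forall delta eps : R, 0 < delta < 1 -> 0 < eps < 1 ->
      exists m l : nat,
        (1 <= m)%nat /\ (1 <= l)%nat /\
        INR m <= C * (1 + ln (1 / delta)) /\
        INR l <= C * (1 + ln (1 / eps) + ln (1 + ln (1 / delta))) /\
        forall E : R, - 2 ^ (l - 1) + 1 <= E <= 2 ^ (l - 1) ->
          prob_outside m l E eps <= delta.
Proof.
  exists 11. split; [lra|]. intros delta eps Hd He.
  pose proof ln_lt_2 as Hln2.
  assert (Hln2' : ln 2 < 1).
  { rewrite <- ln_exp with 1. apply ln_increasing; [lra|].
    pose proof (exp_ineq1 1 ltac:(lra)). lra. }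
  set (D := ln (1 / delta)).
  assert (HD : 0 < D).
  { unfold D. rewrite <- ln_1. apply ln_increasing; [lra|].
    apply (Rmult_lt_reg_r delta); [lra|]. field_simplify; lra. }
  assert (HeD : 0 < ln (1 / eps)).
  { rewrite <- ln_1. apply ln_increasing; [lra|].
    apply (Rmult_lt_reg_r eps); [lra|]. field_simplify; lra. }
  destruct (base_Int_part D) as [Hz1 Hz2].
  set (z := Int_part D) in *.
  assert (Hz0 : (0 <= z)%Z).
  { assert (IZR (-1) < IZR z) by (simpl; lra). apply lt_IZR in H. lia. }
  set (m := (2 + Z.to_nat z)%nat).
  assert (Hm : INR m = 2 + IZR z).
  { unfold m. rewrite plus_INR, (INR_IZR_INZ (Z.to_nat z)), Z2Nat.id by auto. simpl. lra. }
  assert (HlnD : 0 < ln (1 + D)) by (rewrite <- ln_1; apply ln_increasing; lra).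
  assert (Hlnm : ln (INR m) < 1 + ln (1 + D)).
  { apply Rle_lt_trans with (ln (2 * (1 + D))).
    - apply ln_le'; lra.
    - rewrite ln_mult by lra. lra. }
  assert (Hlnm0 : 0 < ln (INR m)) by (rewrite <- ln_1; apply ln_increasing; lra).
  set (X := 6 + 2 * (ln (INR m) + ln (1 / eps)) / ln 2).
  assert (HX : 0 < X).
  { unfold X. assert (0 < 2 * (ln (INR m) + ln (1 / eps)) / ln 2).
    { apply Rdiv_lt_0_compat; lra. } lra. }
  destruct (archimed X) as [Hu1 Hu2].
  set (u := up X) in *.
  assert (Hu0 : (1 <= u)%Z).
  { assert (IZR 0 < IZR u) by (simpl; lra). apply lt_IZR in H. lia. }
  set (l := Z.to_nat u).
  assert (Hl : INR l = IZR u) by (unfold l; rewrite INR_IZR_INZ, Z2Nat.id by lia; auto).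
  exists m, l. split; [unfold m; lia|]. split; [unfold l; lia|].
  split; [fold D; lra|].
  split.
  { rewrite Hl. fold D.
    assert (2 * (ln (INR m) + ln (1 / eps)) / ln 2 <= 4 * (ln (INR m) + ln (1 / eps))).
    { apply (Rmult_le_reg_r (ln 2)); [lra|].
      replace (2 * (ln (INR m) + ln (1 / eps)) / ln 2 * ln 2)
        with (2 * (ln (INR m) + ln (1 / eps))) by (field; lra).
      nra. }
    unfold X in *. lra. }
  intros E HE. apply core; auto; try (unfold m; lia); try (unfold l; lia); try lra.
  -
    assert (Hpos : 0 < 2 ^ 6 * INR m ^ 2 * (1 / eps) ^ 2).
    { apply Rmult_lt_0_compat; [apply Rmult_lt_0_compat|]; apply pow_lt; try lra.
      apply Rdiv_lt_0_compat; lra. }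
    replace (64 * INR m ^ 2 / eps ^ 2) with (2 ^ 6 * INR m ^ 2 * (1 / eps) ^ 2) by (field; lra).
    left. rewrite <- (exp_ln (2 ^ l)) by (apply pow_lt; lra).
    rewrite <- (exp_ln (2 ^ 6 * INR m ^ 2 * (1 / eps) ^ 2)) by exact Hpos.
    apply exp_increasing.
    rewrite !ln_mult, !ln_pow; try lra; try (apply pow_lt; lra);
      try (apply Rdiv_lt_0_compat; lra).
    2: { apply Rmult_lt_0_compat; apply pow_lt; lra. }
    rewrite Hl.
    assert (X * ln 2 < IZR u * ln 2) by (apply Rmult_lt_compat_r; lra).
    assert (X * ln 2 = 6 * ln 2 + 2 * (ln (INR m) + ln (1 / eps))) by (unfold X; field; lra).
    replace (INR 6) with 6 by (simpl; lra). replace (INR 2) with 2 by (simpl; lra). lra.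
    apply pow_lt, Rdiv_lt_0_compat; lra.
  -
    assert (H16 : 1 / delta < 16 ^ m).
    { rewrite <- (exp_ln (1 / delta)) by (apply Rdiv_lt_0_compat; lra).
      rewrite <- (exp_ln (16 ^ m)) by (apply pow_lt; lra).
      apply exp_increasing. fold D.
      rewrite ln_pow by lra.
      replace 16 with (2 ^ 4) by (simpl; lra).
      rewrite ln_pow by lra. replace (INR 4) with 4 by (simpl; lra). nra. }
    replace delta with (/ (1 / delta)) by (field; lra).
    left. apply Rinv_lt_contravar; auto.
    apply Rmult_lt_0_compat; [apply Rdiv_lt_0_compat; lra| apply pow_lt; lra].
Qed.
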